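(* Let $\mathbb{J}=\mathbb{N}\times(\mathbb{N}\cup\{\omega\})$ with the order $(j,k)\le(m,n)$ iff either ($j=m$ and $k\le n$) or ($n=\omega$ and $k\le m$), where $\mathbb{N}\cup\{\omega\}$ is ordered with $\omega$ above all naturals. Then $\mathbb{J}$ is a dcpo, its Scott space $\Sigma\mathbb{J}$ is coherent and $S^{\ast}$-well-filtered, but $\Sigma\mathbb{J}$ is not a strong $d$-space and hence not strongly well-filtered.
   Context: $\Sigma P$ is a poset $P$ with its Scott topology (a set $U$ is Scott open if $U={\uparrow}U$ and every directed $D$ with existing supremum $\bigvee D\in U$ meets $U$). For a space $X$, ${\uparrow}$ is taken in the specialization order ($x\le y$ iff $x\in cl\{y\}$); $K(X)$ is the set of nonempty compact saturated (= upper) subsets; a family in $K(X)$ is filtered if any two members contain a common member. $X$ is coherent if the intersection of two compact saturated sets is compact. $X$ is a strong $d$-space if for every directed $D\subseteq X$, $x\in X$ and open $U$, $\bigcap_{d\in D}{\uparrow}d\cap{\uparrow}x\subseteq U$ implies ${\uparrow}d\cap{\uparrow}x\subseteq U$ for some $d\in D$. $X$ is strongly well-filtered if for every filtered $\{K_i\}\subseteq K(X)$, $G\in K(X)$ and open $U$, $\bigcap_i K_i\cap G\subseteq U$ implies $K_i\cap G\subseteq U$ for some $i$; $X$ is $S^{\ast}$-well-filtered if the same holds for all nonempty open $U$. *)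

(* Defs.v *)
From Stdlib Require Import List.

Set Implicit Arguments.

Section OrderDefs.
Variable P : Type.
Variable le : P -> P -> Prop.

Definition is_poset : Prop :=
  (forall x, le x x) /\
  (forall x y, le x y -> le y x -> x = y) /\
  (forall x y z, le x y -> le y z -> le x z).

Definition directed (D : P -> Prop) : Prop :=
  (exists d, D d) /\
  (forall x y, D x -> D y -> exists z, D z /\ le x z /\ le y z).

Definition is_sup (D : P -> Prop) (s : P) : Prop :=
  (forall d, D d -> le d s) /\
  (forall u, (forall d, D d -> le d u) -> le s u).

Definition is_dcpo : Prop :=
  is_poset /\ forall D, directed D -> exists s, is_sup D s.

Definition scott_open (U : P -> Prop) : Prop :=
  (forall x y, U x -> le x y -> U y) /\
  (forall D s, directed D -> is_sup D s -> U s -> exists d, D d /\ U d).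
End OrderDefs.

Section SpaceDefs.
Variable X : Type.
Variable open : (X -> Prop) -> Prop.

Definition spec (x y : X) : Prop := forall U, open U -> U x -> U y.

Definition up (A : X -> Prop) : X -> Prop := fun y => exists x, A x /\ spec x y.
Definition up1 (x : X) : X -> Prop := fun y => spec x y.

Definition saturated (A : X -> Prop) : Prop := forall y, up A y -> A y.

Definition compact (A : X -> Prop) : Prop :=
  forall F : (X -> Prop) -> Prop,
    (forall U, F U -> open U) ->
    (forall x, A x -> exists U, F U /\ U x) ->
    exists l : list (X -> Prop),
      (forall U, In U l -> F U) /\ (forall x, A x -> exists U, In U l /\ U x).

Definition inK (A : X -> Prop) : Prop :=
  (exists x, A x) /\ compact A /\ saturated A.

Definition coherent : Prop :=
  forall A B, compact A -> saturated A -> compact B -> saturated B ->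
    compact (fun x => A x /\ B x).

Definition filtered_K (I : Type) (K : I -> X -> Prop) : Prop :=
  inhabited I /\ (forall i, inK (K i)) /\
  (forall i j, exists k, forall x, K k x -> K i x /\ K j x).

Definition strong_d_space : Prop :=
  forall D : X -> Prop, directed spec D ->
  forall (x : X) (U : X -> Prop), open U ->
    (forall y, (forall d, D d -> up1 d y) -> up1 x y -> U y) ->
    exists d, D d /\ forall y, up1 d y -> up1 x y -> U y.

Definition strongly_well_filtered : Prop :=
  forall (I : Type) (K : I -> X -> Prop), filtered_K K ->
  forall (G : X -> Prop), inK G ->
  forall U : X -> Prop, open U ->
    (forall y, (forall i, K i y) -> G y -> U y) ->
    exists i, forall y, K i y -> G y -> U y.

Definition S_star_well_filtered : Prop :=
  forall (I : Type) (K : I -> X -> Prop), filtered_K K ->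
  forall (G : X -> Prop), inK G ->
  forall U : X -> Prop, open U -> (exists u, U u) ->
    (forall y, (forall i, K i y) -> G y -> U y) ->
    exists i, forall y, K i y -> G y -> U y.
End SpaceDefs.

(** * The poset J = N x (N ∪ {omega}); None encodes omega *)
Definition Nw := option nat.

Definition Nw_le (a b : Nw) : Prop :=
  match a, b with
  | _, None => True
  | Some x, Some y => x <= y
  | None, Some _ => False
  end.

Definition J := (nat * Nw)%type.

Definition J_le (p q : J) : Prop :=
  let (j, k) := p in let (m, n) := q in
  (j = m /\ Nw_le k n) \/ (n = None /\ Nw_le k (Some m)).

Definition SigmaJ_open : (J -> Prop) -> Prop := scott_open J_le.

(* Main.v *)
Require Import Defs.
From Stdlib Require Import List Lia Classical PeanoNat Arith.
Import ListNotations.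

Lemma Nw_le_refl n : Nw_le n n.
Proof. destruct n; simpl; auto. Qed.

Lemma Nw_le_trans a b c : Nw_le a b -> Nw_le b c -> Nw_le a c.
Proof. destruct a, b, c; simpl in *; intros; auto; try lia; contradiction. Qed.

Lemma J_le_refl x : J_le x x.
Proof. destruct x; left; split; auto; apply Nw_le_refl. Qed.

Lemma J_le_trans x y z : J_le x y -> J_le y z -> J_le x z.
Proof.
  destruct x as [j k], y as [m n], z as [p q]; simpl.
  intros [[H0 H1]|[H0 H1]] [[H2 H3]|[H2 H3]]; subst.
  - left; split; auto; eapply Nw_le_trans; eauto.
  - right; split; auto; eapply Nw_le_trans; eauto.
  - destruct q; simpl in H3; [contradiction|]. right; split; auto.
  - simpl in H3; contradiction.
Qed.

Lemma J_le_antisym x y : J_le x y -> J_le y x -> x = y.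
Proof.
  destruct x as [j [k|]], y as [m [n|]]; simpl;
  intros [[H0 H1]|[H0 H1]] [[H2 H3]|[H2 H3]]; subst; simpl in *;
  try contradiction; try discriminate; try (f_equal; f_equal; lia); auto.
Qed.

Lemma J_max m z : J_le (m, None) z -> z = (m, None).
Proof.
  destruct z as [p q]; simpl. intros [[H0 H1]|[H0 H1]]; subst.
  - destruct q; simpl in H1; [contradiction|reflexivity].
  - simpl in H1; contradiction.
Qed.

Lemma bounded_max (P : nat -> Prop) B : (exists k, P k) -> (forall k, P k -> k <= B) ->
  exists m, P m /\ forall k, P k -> k <= m.
Proof.
  revert P; induction B; intros P Hex Hb.
  - destruct Hex as [k Hk]. assert (k = 0) by (apply Hb in Hk; lia). subst.
    exists 0; split; [auto|]. intros k1 Hk1; apply Hb in Hk1; lia.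
  - destruct (classic (P (S B))) as [HP|HP].
    + exists (S B); split; auto.
    + apply IHB; auto. intros k Hk. assert (k <> S B) by (intro; subst; contradiction).
      apply Hb in Hk; lia.
Qed.

Lemma least (P : nat -> Prop) : (exists k, P k) -> exists m, P m /\ forall k, P k -> m <= k.
Proof.
  intros [k Hk]. apply NNPP; intro Hn.
  assert (forall n k, k <= n -> ~ P k).
  { induction n; intros k' Hk' HP.
    - assert (k' = 0) by lia; subst. apply Hn; exists 0; split; auto; intros; lia.
    - destruct (Nat.eq_dec k' (S n)) as [->|Hne].
      + apply Hn. exists (S n); split; auto. intros k'' Hk''.
        destruct (le_lt_dec (S n) k''); auto. exfalso; apply (IHn k''); auto; lia.
      + apply (IHn k'); auto; lia. }
  apply (H k k); auto.
Qed.

Definition col (c : nat) (z : J) : Prop := exists k, z = (c, Some k).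

Lemma col_directed c : directed J_le (col c).
Proof.
  split. exists (c, Some 0); exists 0; auto.
  intros x y [a ->] [b ->]. exists (c, Some (max a b)). split. exists (max a b); auto.
  split; left; split; auto; simpl; lia.
Qed.

Lemma col_sup c : is_sup J_le (col c) (c, None).
Proof.
  split.
  - intros d [k ->]. left; split; simpl; auto.
  - intros [p n] Hu. destruct n as [q|].
    + destruct (Hu (c, Some (S q)) (ex_intro _ _ eq_refl)) as [[_ H]|[H _]]; simpl in *; [lia|discriminate].
    + destruct (Hu (c, Some (S p)) (ex_intro _ _ eq_refl)) as [[H _]|[_ H]]; simpl in *.
      * subst; left; split; simpl; auto.
      * lia.
Qed.

Lemma dir_cases D : directed J_le D ->
  (exists d, D d /\ is_sup J_le D d) \/
  (exists c, is_sup J_le D (c,None) /\ forall K, exists k, K <= k /\ D (c, Some k)).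
Proof.
  intros [[d0 Hd0] Hdir].
  destruct (classic (exists m, D (m,None))) as [[m Hm]|Hno].
  - left. exists (m, None). split; auto. split.
    + intros d Hd. destruct (Hdir d (m,None) Hd Hm) as [z [Hz [H1 H2]]].
      apply J_max in H2. subst; auto.
    + intros u Hu; apply Hu; auto.
  - assert (HS: forall d, D d -> exists j k, d = (j, Some k)).
    { intros [j [k|]] Hd; eauto. exfalso; eauto. }
    destruct (HS d0 Hd0) as [c [k0 Hc]].
    assert (Hcol: forall d, D d -> exists k, d = (c, Some k)).
    { intros d Hd. destruct (HS d Hd) as [j [k ->]].
      destruct (Hdir _ _ Hd Hd0) as [z [Hz [H1 H2]]]. destruct (HS z Hz) as [p [q ->]].
      subst d0. simpl in H1, H2.
      destruct H1 as [[-> _]|[H _]]; [|discriminate].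
      destruct H2 as [[-> _]|[H _]]; [|discriminate]. eauto. }
    destruct (classic (exists B, forall k, D (c,Some k) -> k <= B)) as [[B HB]|Hunb].
    + destruct (bounded_max (fun k => D (c, Some k)) B) as [m [Hm Hmax]]; eauto.
      { exists k0; subst; auto. }
      left. exists (c, Some m). split; auto. split.
      * intros d Hd. destruct (Hcol d Hd) as [k ->]. left; split; simpl; auto.
      * intros u Hu; apply Hu; auto.
    + right. exists c. split.
      * split.
        -- intros d Hd. destruct (Hcol d Hd) as [k ->]. left; split; simpl; auto.
        -- intros [p n] Hu. destruct n as [q|].
           ++ exfalso; apply Hunb; exists q. intros k Hk. apply Hu in Hk. simpl in Hk.
              destruct Hk as [[_ H]|[H _]]; [exact H|discriminate].
           ++ destruct (Nat.eq_dec c p) as [->|Hne].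
              ** left; split; simpl; auto.
              ** exfalso; apply Hunb; exists p; intros k Hk; apply Hu in Hk; simpl in Hk.
                 destruct Hk as [[H _]|[_ H]]; [contradiction|exact H].
      * intros K. apply NNPP; intro Hn. apply Hunb. exists K. intros k Hk.
        destruct (le_lt_dec k K); auto. exfalso; apply Hn; exists k; split; auto; lia.
Qed.

Lemma sup_unique D s1 s2 : is_sup J_le D s1 -> is_sup J_le D s2 -> s1 = s2.
Proof.
  intros [H1 H1'] [H2 H2']. apply J_le_antisym; [apply H1'|apply H2']; auto.
Qed.

Lemma sup_char D s : directed J_le D -> is_sup J_le D s ->
  D s \/ (exists c, s = (c,None) /\ forall K, exists k, K <= k /\ D (c,Some k)).
Proof.
  intros HD Hs. destruct (dir_cases _ HD) as [[d [Hd Hsd]]|[c [Hsc Hc]]].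
  - left. rewrite (sup_unique _ _ _ Hs Hsd); auto.
  - right. exists c; split; auto. apply (sup_unique _ _ _ Hs Hsc).
Qed.

Lemma dcpo : is_dcpo J_le.
Proof.
  split.
  - split; [exact J_le_refl|split; [exact J_le_antisym|exact J_le_trans]].
  - intros D HD. destruct (dir_cases _ HD) as [[d [_ H]]|[c [H _]]]; eauto.
Qed.

Lemma open_intro (U : J -> Prop) : (forall x y, U x -> J_le x y -> U y) ->
  (forall c, U (c,None) -> exists k, U (c,Some k)) -> SigmaJ_open U.
Proof.
  intros Hup Hsc. unfold SigmaJ_open, scott_open. split; auto.
  intros D s HD Hs HUs.
  destruct (sup_char _ _ HD Hs) as [Hd | [c [-> Hc]]]. exists s; auto.
  destruct (Hsc c HUs) as [k Hk]. destruct (Hc k) as [k' [Hkk' Hdk']].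
  exists (c,Some k'); split; auto. apply Hup with (c,Some k); auto.
  left; split; auto; simpl; lia.
Qed.

Lemma open_up U x y : SigmaJ_open U -> U x -> J_le x y -> U y.
Proof. intros [H _]; eauto. Qed.
Arguments open_up {U x y}.

Lemma open_col U c : SigmaJ_open U -> U (c,None) -> exists k, U (c,Some k).
Proof.
  intros [_ H] Hc. destruct (H (col c) (c,None) (col_directed c) (col_sup c) Hc) as [d [[k ->] Hd]].
  eauto.
Qed.
Arguments open_col {U c}.

Lemma spec_of_le {x y} : J_le x y -> spec SigmaJ_open x y.
Proof. intros H U HU Ux; eapply open_up; eauto. Qed.

Lemma le_of_spec {x y} : spec SigmaJ_open x y -> J_le x y.
Proof.
  intros H. apply NNPP; intro Hn.
  assert (HU: SigmaJ_open (fun z => ~ J_le z y)).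
  { apply open_intro.
    - intros a b Ha Hab Hb. apply Ha; eapply J_le_trans; eauto.
    - intros c Hc. destruct y as [p [q|]].
      + exists (S q). simpl; intros [[_ H']|[H' _]]; [lia|discriminate].
      + exists (S p). simpl; intros [[H' _]|[_ H']].
        * subst; apply Hc; left; split; simpl; auto.
        * lia. }
  apply (H _ HU Hn). apply J_le_refl.
Qed.

Lemma spec_trans x y z : spec SigmaJ_open x y -> spec SigmaJ_open y z -> spec SigmaJ_open x z.
Proof. unfold spec; intros H1 H2 U HU Ux; apply H2; [exact HU| apply H1; assumption]. Qed.

Definition CF (A : J -> Prop) := exists N, forall m k, A (m, Some k) -> m < N.

Definition V (A : J -> Prop) (N : nat) (z : J) : Prop :=
  fst z < N \/ snd z = None \/
  exists q, snd z = Some q /\ N <= q /\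
    ((exists k, k < q /\ A (fst z, Some k)) \/ (forall k, ~ A (fst z, Some k))).

Lemma V_open A N : SigmaJ_open (V A N).
Proof.
  apply open_intro.
  - intros [p n] [p' n'] Hv Hle. unfold V in *; simpl in *.
    destruct Hle as [[H0 Hn]|[H0 Hn]]; subst.
    + destruct Hv as [H|[H|[q [H1 [H2 H3]]]]].
      * left; auto.
      * subst n; destruct n'; simpl in Hn; [contradiction|right;left;auto].
      * subst n. destruct n' as [q'|]; [| right;left;auto].
        right; right; exists q'; simpl in Hn; repeat split; auto; try lia.
        destruct H3 as [[k [Hk HA]]|Hall]; [left; exists k; split; auto; lia | right; auto].
    + right; left; auto.
  - intros c _. unfold V; simpl. destruct (lt_dec c N).
    + exists 0; left; auto.
    + destruct (classic (exists k, A (c,Some k))) as [[k0 Hk0]|Hno].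
      * exists (max N (S k0)). right; right; exists (max N (S k0)); repeat split; auto; try lia.
        left; exists k0; split; auto; lia.
      * exists N; right; right; exists N; repeat split; auto.
        right; intros k Hk; apply Hno; eauto.
Qed.

Lemma list_bound (f : nat -> J -> Prop) l : (forall U, In U l -> exists N, U = f N) ->
  exists M, forall U, In U l -> exists N, N <= M /\ U = f N.
Proof.
  induction l; simpl.
  - intros _; exists 0; intros _ [].
  - intros H. destruct IHl as [M HM]; auto.
    destruct (H a (or_introl eq_refl)) as [N ->]. exists (max M N).
    intros U [<-|HU]. exists N; split; auto; lia.
    destruct (HM U HU) as [N' [? ->]]; exists N'; split; [lia|auto].
Qed.

Lemma compact_CF {A} : compact SigmaJ_open A -> CF A.
Proof.
  intros Hc. apply NNPP; intro Hn.
  destruct (Hc (fun U => exists N, U = V A N)) as [l [Hl Hcov]].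
  - intros U [N ->]; apply V_open.
  - intros [p n] _. exists (V A (S p)); split; eauto. left; simpl; lia.
  - destruct (list_bound (V A) l Hl) as [M HM].
    assert (exists m k, A (m,Some k) /\ M <= m) as [m [k [HA HMm]]].
    { apply NNPP; intro H'. apply Hn. exists M. intros m k HA.
      destruct (le_lt_dec M m); auto. exfalso; apply H'; eauto. }
    destruct (least (fun k => A (m,Some k))) as [k0 [HA0 Hmin]]; eauto.
    destruct (Hcov (m,Some k0) HA0) as [U [HU HUx]].
    destruct (HM U HU) as [N [HN ->]]. unfold V in HUx; simpl in HUx.
    destruct HUx as [H|[H|[q [Hq [Hq2 [[k' [Hk' HA']]|Hall]]]]]]; [lia|discriminate| |].
    + injection Hq as <-. apply Hmin in HA'; lia.
    + injection Hq as <-. apply (Hall k0 HA0).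
Qed.

Lemma fin_union (F : (J -> Prop) -> Prop) (B : nat -> J -> Prop) n :
  (forall i, i < n -> exists l, (forall U, In U l -> F U) /\ forall x, B i x -> exists U, In U l /\ U x) ->
  exists l, (forall U, In U l -> F U) /\ forall i x, i < n -> B i x -> exists U, In U l /\ U x.
Proof.
  induction n; intros H.
  - exists nil; split; [intros _ []| intros; lia].
  - destruct IHn as [l1 [Hl1 Hc1]]. { intros; apply H; lia. }
    destruct (H n (Nat.lt_succ_diag_r n)) as [l2 [Hl2 Hc2]].
    exists (l1 ++ l2); split.
    + intros U HU; apply in_app_or in HU; destruct HU; auto.
    + intros i x Hi Hx. destruct (Nat.eq_dec i n) as [->|Hne].
      * destruct (Hc2 x Hx) as [U [? ?]]; exists U; split; auto; apply in_or_app; auto.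
      * destruct (Hc1 i x ltac:(lia) Hx) as [U [? ?]]; exists U; split; auto; apply in_or_app; auto.
Qed.

Lemma CF_compact A : CF A -> compact SigmaJ_open A.
Proof.
  intros [N HN] F HF Hcov.
  assert (Hcol: forall i, i < N -> exists l, (forall U, In U l -> F U) /\
     forall x, (A x /\ exists k, x = (i,Some k)) -> exists U, In U l /\ U x).
  { intros i _. destruct (classic (exists k, A (i,Some k))) as [Hex|Hno].
    - destruct (least _ Hex) as [k0 [HA0 Hmin]]. destruct (Hcov _ HA0) as [U [HFU HU]].
      exists [U]; split. intros U' [<-|[]]; auto.
      intros x [Hx [k ->]]. exists U; split; [left; auto|].
      apply (open_up (HF U HFU) HU). left; split; auto; simpl; apply Hmin; auto.
    - exists nil; split; [intros _ []|]. intros x [Hx [k ->]]; exfalso; eauto. }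
  destruct (fin_union F _ N Hcol) as [l1 [Hl1 Hc1]].
  assert (Hmax: exists l2, (forall U, In U l2 -> F U) /\
     forall p, A (p,None) -> exists U, In U l2 /\ U (p,None)).
  { destruct (classic (exists p, A (p,None))) as [[p Hp]|Hno].
    - destruct (Hcov _ Hp) as [U [HFU HU]]. destruct (open_col (HF U HFU) HU) as [k0 Hk0].
      assert (Hpc: forall i, i < k0 -> exists l, (forall U, In U l -> F U) /\
          forall x, (A x /\ x = (i,None)) -> exists U, In U l /\ U x).
      { intros i _. destruct (classic (A (i,None))) as [Hi|Hi].
        - destruct (Hcov _ Hi) as [U' [? ?]]. exists [U']; split.
          intros ? [<-|[]]; auto. intros x [_ ->]; exists U'; split; [left|]; auto.
        - exists nil; split; [intros _ []|]. intros x [Hx ->]; contradiction. }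
      destruct (fin_union F _ k0 Hpc) as [l2 [Hl2 Hc2]]. exists (U :: l2). split.
      + intros U' [<-|H]; auto.
      + intros p' Hp'. destruct (lt_dec p' k0) as [Hl|Hl].
        * destruct (Hc2 p' (p',None) Hl (conj Hp' eq_refl)) as [U' [? ?]];
          exists U'; split; [right|]; auto.
        * exists U; split; [left; auto|]. apply (open_up (HF U HFU) Hk0).
          right; split; auto; simpl; lia.
    - exists nil; split; [intros _ []|]. intros p Hp; exfalso; eauto. }
  destruct Hmax as [l2 [Hl2 Hc2]]. exists (l1 ++ l2). split.
  - intros U HU; apply in_app_or in HU; destruct HU; auto.
  - intros [p n] Hx. destruct n as [k|].
    + destruct (Hc1 p (p,Some k) (HN p k Hx) (conj Hx (ex_intro _ k eq_refl))) as [U [? ?]];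
      exists U; split; auto; apply in_or_app; auto.
    + destruct (Hc2 p Hx) as [U [? ?]]; exists U; split; auto; apply in_or_app; auto.
Qed.

Lemma coh : coherent SigmaJ_open.
Proof.
  intros A B HA _ HB _. apply CF_compact. destruct (compact_CF HA) as [N HN].
  exists N; intros m k [Ha _]; eauto.
Qed.

Lemma filt_comb {I} {K : I -> J -> Prop} (G U : J -> Prop) : filtered_K SigmaJ_open K ->
  forall L : list J, (forall t, In t L -> G t -> ~ U t -> exists i, ~ K i t) ->
  exists j, forall t, In t L -> G t -> ~ U t -> ~ K j t.
Proof.
  intros [[i0] [_ Hf]] L. induction L as [|t L IH]; intros H.
  - exists i0. intros t [].
  - destruct IH as [j1 Hj1]. { intros; apply H; auto; right; auto. }
    destruct (classic (G t /\ ~ U t)) as [[Gt Ut]|Hn].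
    + destruct (H t (or_introl eq_refl) Gt Ut) as [i Hi].
      destruct (Hf i j1) as [k Hk]. exists k.
      intros t' [<-|Ht'] Gt' Ut' Hkt; apply Hk in Hkt; destruct Hkt as [Hki Hkj].
      * contradiction.
      * apply (Hj1 t' Ht' Gt' Ut' Hkj).
    + exists j1. intros t' [<-|Ht'] Gt' Ut'.
      * exfalso; apply Hn; auto.
      * apply Hj1; auto.
Qed.

Lemma sstar : S_star_well_filtered SigmaJ_open.
Proof.
  intros I K HK G HG U HU [u Hu] Hsub.
  destruct HG as [_ [HGc HGs]].
  destruct (compact_CF HGc) as [N HN].
  assert (Hk0: exists k0, forall p, k0 <= p -> U (p,None)).
  { destruct u as [a [k|]].
    - exists k. intros p Hp. apply (open_up HU Hu). right; split; auto; simpl; lia.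
    - destruct (open_col HU Hu) as [k Hk]. exists k; intros p Hp; apply (open_up HU Hk).
      right; split; auto; simpl; lia. }
  destruct Hk0 as [k0 Hk0].
  assert (HKb: exists Kb, forall m, m < N -> U (m,None) -> U (m,Some Kb)).
  { clear - HU. induction N. exists 0; intros; lia.
    destruct IHN as [Kb HKb]. destruct (classic (U (N,None))) as [HUN|HUN].
    - destruct (open_col HU HUN) as [k Hk]. exists (max Kb k). intros m Hm HUm.
      destruct (Nat.eq_dec m N) as [->|Hne].
      + apply (open_up HU Hk). left; split; auto; simpl; lia.
      + apply (open_up HU (HKb m ltac:(lia) HUm)). left; split; auto; simpl; lia.
    - exists Kb. intros m Hm HUm. destruct (Nat.eq_dec m N) as [->|Hne];
      [contradiction|apply HKb; auto; lia]. }
  destruct HKb as [Kb HKb].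
  set (L := map (fun mk : nat * nat => (fst mk, Some (snd mk))) (list_prod (seq 0 N) (seq 0 Kb))
            ++ map (fun m => (m, @None nat)) (seq 0 k0)).
  assert (HL1: forall m k, m < N -> k < Kb -> In (m, Some k) L).
  { intros m k Hm Hk. unfold L. apply in_or_app; left. apply in_map_iff.
    exists (m,k); split; auto. apply in_prod; apply in_seq; lia. }
  assert (HL2: forall m, m < k0 -> In (m, None) L).
  { intros m Hm. unfold L. apply in_or_app; right. apply in_map_iff.
    exists m; split; auto. apply in_seq; lia. }
  destruct (filt_comb G U HK L) as [j Hj].
  { intros t _ Gt Ut. apply NNPP; intro Hn. apply Ut. apply Hsub; auto.
    intros i; apply NNPP; intro Hi; apply Hn; exists i; auto. }
  destruct HK as [_ [HKi _]].
  exists j. intros y Hy Gy. apply NNPP; intro Uy. destruct y as [p [k|]].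
  - assert (Hp: p < N) by eauto. destruct (classic (U (p,None))) as [UpN|UpN].
    + destruct (le_lt_dec Kb k).
      * apply Uy, (open_up HU (HKb p Hp UpN)); left; split; auto; simpl; lia.
      * apply (Hj (p,Some k) (HL1 p k Hp l) Gy Uy Hy).
    + assert (Hp0: p < k0).
      { destruct (le_lt_dec k0 p); auto. exfalso; apply UpN, Hk0; auto. }
      assert (Hle: spec SigmaJ_open (p, Some k) (p, None)).
      { apply spec_of_le; left; split; simpl; auto. }
      assert (Gp: G (p,None)) by (apply HGs; exists (p,Some k); auto).
      destruct (HKi j) as [_ [_ HKs]].
      assert (Kp: K j (p,None)) by (apply HKs; exists (p,Some k); auto).
      apply (Hj (p,None) (HL2 p Hp0) Gp UpN Kp).
  - assert (Hp0: p < k0).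
    { destruct (le_lt_dec k0 p); auto. exfalso; apply Uy, Hk0; auto. }
    apply (Hj (p,None) (HL2 p Hp0) Gy Uy Hy).
Qed.

Lemma empty_open : SigmaJ_open (fun _ => False).
Proof. split. intros; contradiction. intros D s _ _ []. Qed.

Lemma key y : (forall k, spec SigmaJ_open (0, Some k) y) -> spec SigmaJ_open (1, Some 1) y -> False.
Proof.
  intros H1 H2. apply le_of_spec in H2.
  assert (J_le (0,None) y).
  { apply (proj2 (col_sup 0)). intros d [k ->]. apply le_of_spec; auto. }
  apply J_max in H. subst. simpl in H2. destruct H2 as [[H _]|[_ H]]; lia.
Qed.

Lemma not_sd : ~ strong_d_space SigmaJ_open.
Proof.
  intro H.
  assert (HD: directed (spec SigmaJ_open) (col 0)).
  { split. exists (0, Some 0); exists 0; auto.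
    intros x y [a ->] [b ->]. exists (0, Some (max a b)). split. exists (max a b); auto.
    split; apply spec_of_le; left; split; auto; simpl; lia. }
  destruct (H (col 0) HD (1, Some 1) (fun _ => False) empty_open) as [d [[k ->] Hd]].
  - intros y Hy H1. apply (key y); auto. intros k; apply Hy; exists k; auto.
  - apply (Hd (S k, None)); apply spec_of_le; right; split; auto; simpl; lia.
Qed.

Lemma inK_up1 x : inK SigmaJ_open (up1 SigmaJ_open x).
Proof.
  split. exists x; intros U _ Ux; auto.
  split.
  - intros F HF Hc. destruct (Hc x (fun U _ h => h)) as [U [HFU HU]].
    exists [U]. split. intros U' [<-|[]]; auto.
    intros y Hy; exists U; split; [left; auto| apply Hy; auto].
  - intros y [z [Hz Hzy]]. unfold up1 in *. eapply spec_trans; eauto.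
Qed.

Lemma not_swf : ~ strongly_well_filtered SigmaJ_open.
Proof.
  intros H.
  destruct (H nat (fun i => up1 SigmaJ_open (0,Some i)))
    with (G := up1 SigmaJ_open (1,Some 1)) (U := fun _ : J => False) as [i Hi].
  - split. constructor; exact 0. split. intros; apply inK_up1.
    intros i j. exists (max i j). intros x Hx. unfold up1 in *.
    split; eapply spec_trans; try exact Hx; apply spec_of_le; left; split; auto; simpl; lia.
  - apply inK_up1.
  - apply empty_open.
  - intros y Hy HG. apply (key y); auto.
  - apply (Hi (S i, None)); apply spec_of_le; right; split; auto; simpl; lia.
Qed.

Theorem mainTheorem13 :
  is_dcpo J_le /\
  coherent SigmaJ_open /\
  S_star_well_filtered SigmaJ_open /\
  ~ strong_d_space SigmaJ_open /\
  ~ strongly_well_filtered SigmaJ_open.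
Proof.
  split; [exact dcpo|split; [exact coh|split; [exact sstar|split; [exact not_sd|exact not_swf]]]].
Qed.
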